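(* Let $k \ge 2$ and $n$ be positive integers, and let $a_1<\dots<a_r<n-1$ be positive integers. Then there is a connected graph $G$ with \[\mathrm{SW}_k(G)=\mathrm{SW}_k(S_n)-\binom{a_1}{k-1}-\dots-\binom{a_r}{k-1}.\]
   Context: $S_n$ denotes the star graph on $n$ vertices (one center adjacent to the other $n-1$ vertices, with $n-1$ edges). For a connected graph $G$ and a subset $S \subset V(G)$, the Steiner distance $d(S)$ is the smallest number of edges in a connected subgraph of $G$ whose vertex set contains $S$. For an integer $k\ge 2$, the Steiner--Wiener $k$ index of $G$ is $\mathrm{SW}_k(G)=\sum_{S \subset V(G),\ |S|=k} d(S)$. *)

(* Defs.v *)
From mathcomp Require Import all_boot all_order all_algebra.
Set Implicit Arguments. Unset Strict Implicit. Unset Printing Implicit Defensive.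

Definition simple_graph (T : finType) (e : rel T) :=
  symmetric e /\ irreflexive e.

Definition gconnected (T : finType) (e : rel T) :=
  0 < #|T| /\ forall x y : T, connect e x y.

Definition gedges (T : finType) (e : rel T) : {set {set T}} :=
  [set f : {set T} | [exists x, exists y, e x y && (f == [set x; y])]].

Definition is_subgraph (T : finType) (e : rel T) (W : {set T}) (F : {set {set T}}) :=
  (F \subset gedges e) && [forall f in F, f \subset W].

Definition frel_of (T : finType) (F : {set {set T}}) : rel T :=
  fun x y => [set x; y] \in F.

Definition sub_connected (T : finType) (W : {set T}) (F : {set {set T}}) :=
  [forall u in W, forall v in W, connect (frel_of F) u v].

Definition steiner_adm (T : finType) (e : rel T) (S : {set T})
    (H : {set T} * {set {set T}}) :=
  [&& is_subgraph e H.1 H.2, sub_connected H.1 H.2 & S \subset H.1].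

(* The default value #|gedges e| is the edge count of G itself,
   which is admissible whenever G is connected, so for connected G this is
   exactly the minimum. *)
Definition steiner_dist (T : finType) (e : rel T) (S : {set T}) : nat :=
  \big[minn/#|gedges e|]_(H | steiner_adm e S H) #|H.2|.

Definition SW (k : nat) (T : finType) (e : rel T) : nat :=
  \sum_(S : {set T} | #|S| == k) steiner_dist e S.

Definition star_rel {n : nat} : rel 'I_n :=
  fun i j => ((val i == 0) && (val j != 0)) || ((val j == 0) && (val i != 0)).

(* Main.v *)
Require Import Defs.
From mathcomp Require Import all_boot all_order all_algebra.
Set Implicit Arguments. Unset Strict Implicit.

Section LB.
Variables (T : finType) (F : {set {set T}}) (r : T).

Fixpoint L m : {set T} := if m is m'.+1 then
  L m' :|: [set y | [exists x in L m', frel_of F x y]] else [set r].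

Lemma L_path p : path (frel_of F) r p -> last r p \in L (size p).
Proof.
elim/last_ind: p => [|p z IH] /=; first by rewrite set11.
rewrite rcons_path => /andP[/IH Hp Hz].
rewrite last_rcons size_rcons /= inE; apply/orP; right; rewrite inE.
by apply/existsP; exists (last r p); rewrite Hp.
Qed.

Lemma exP v : exists m, (v \in L m) || ~~ connect (frel_of F) r v.
Proof.
case: (boolP (connect _ r v)) => [/connectP[p Hp ->]|_].
  by exists (size p); rewrite L_path.
by exists 0; rewrite orbT.
Qed.

Definition dd v := ex_minn (exP v).

Lemma dd_min v m : v \in L m -> dd v <= m.
Proof. by rewrite /dd; case: ex_minnP => dv _ H Hm; apply: H; rewrite Hm. Qed.

Lemma dd_in v : connect (frel_of F) r v -> v \in L (dd v).
Proof. by rewrite /dd; case: ex_minnP => dv H _ Hc; rewrite Hc orbF in H. Qed.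

Definition par v := odflt r [pick x in L (dd v).-1 | frel_of F x v].

Lemma par_spec v : connect (frel_of F) r v -> v != r ->
  frel_of F (par v) v /\ dd (par v) < dd v.
Proof.
move=> Hc Hvr; have Hv := dd_in Hc; rewrite /par.
case Edv: (dd v) Hv => [|m] /=.
  by rewrite inE (negbTE Hvr).
rewrite inE => /orP[Hm|].
  by have := dd_min Hm; rewrite Edv ltnn.
rewrite inE => /existsP[x /andP[Hx Hxv]].
case: pickP => [y /andP[Hy Hyv]|Hn]; first by split=> //; apply: dd_min.
by have := Hn x; rewrite Hx Hxv.
Qed.

Lemma set2_eq (a b c d : T) : [set a; b] = [set c; d] ->
  a = c \/ (a = d /\ c = b).
Proof.
move=> E.
have : a \in [set c; d] by rewrite -E set21.
have : c \in [set a; b] by rewrite E set21.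
rewrite !inE => /orP[/eqP H1|/eqP H1] /orP[/eqP H2|/eqP H2]; subst; auto.
Qed.

Lemma conn_lb (W : {set T}) : r \in W -> sub_connected W F -> #|W| <= #|F|.+1.
Proof.
move=> rW HW.
have Hc v : v \in W -> connect (frel_of F) r v.
  by move=> vW; move/forallP: HW => /(_ r); rewrite rW /= => /forallP/(_ v); rewrite vW.
pose g v := [set v; par v].
have inj : {in W :\ r &, injective g}.
  move=> v w; rewrite !inE => /andP[vr vW] /andP[wr wW] /set2_eq [//|[E1 E2]].
  have [_ h1] := par_spec (Hc v vW) vr.
  have [_ h2] := par_spec (Hc w wW) wr.
  by move: h1 h2; rewrite -E1 E2 => h1 h2; have := ltn_trans h1 h2; rewrite ltnn.
have sub : g @: (W :\ r) \subset F.
  apply/subsetP=> f /imsetP[v]; rewrite !inE => /andP[vr vW] ->.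
  have [h _] := par_spec (Hc v vW) vr.
  by rewrite /g setUC.
rewrite (cardsD1 r W) rW ltnS -(card_in_imset inj).
exact: subset_leq_card.
Qed.

End LB.
Set Implicit Arguments. Unset Strict Implicit.

Lemma bigmin_le (I : eqType) (r : seq I) (P : pred I) (F : I -> nat) x j :
  j \in r -> P j -> \big[minn/x]_(i <- r | P i) F i <= F j.
Proof.
elim: r => [//|i r IH]; rewrite inE big_cons => /orP[/eqP<-|jr] Pj.
  by rewrite Pj geq_minl.
case: (P i); last exact: IH.
by apply: leq_trans (geq_minr _ _) (IH jr Pj).
Qed.

Section G.
Variables (T : finType) (e : rel T).
Hypothesis He : simple_graph e.

Lemma gedgeP x y : [set x; y] \in gedges e -> e x y.
Proof.
case: He => Hs Hi.
rewrite inE => /existsP[a /existsP[b /andP[Hab /eqP E]]].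
have ha : a \in [set x; y] by rewrite E set21.
have hb : b \in [set x; y] by rewrite E set22.
have hx : x \in [set a; b] by rewrite -E set21.
have hy : y \in [set a; b] by rewrite -E set22.
move: Hab ha hb hx hy; rewrite !inE.
case: (eqVneq x y) => [<-|nxy].
  rewrite !orbb => Hab /eqP Ea /eqP Eb; by rewrite Ea Eb Hi in Hab.
move=> Hab; case: (eqVneq x a) => [Exa|nxa] _ _ /=.
  subst a.
  case: (eqVneq y x) => [E'|_] /=; first by rewrite E' eqxx in nxy.
  by move=> _ /eqP Eyb; subst.
move=> /eqP Exb /orP[/eqP Eya|/eqP E']; last by rewrite E' -Exb eqxx in nxy.
by subst; rewrite Hs.
Qed.

Lemma sd_eq S v : (exists H, steiner_adm e S H /\ #|H.2| = v) ->
  (forall H, steiner_adm e S H -> v <= #|H.2|) -> steiner_dist e S = v.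
Proof.
move=> [H0 [A0 E0]] Hlb; apply/eqP; rewrite eqn_leq; apply/andP; split.
  by rewrite -E0; apply: bigmin_le => //; rewrite mem_index_enum.
rewrite /steiner_dist; apply: (big_ind (fun m => v <= m)) => //.
- rewrite -E0; apply: subset_leq_card.
  by case/and3P: A0 => /andP[] /=.
- by move=> x y hx hy; rewrite leq_min hx hy.
Qed.

Lemma adm_lb S H : steiner_adm e S H -> S != set0 -> #|S| <= #|H.2|.+1.
Proof.
case: H => W F /and3P[_ /= Hc HS] /set0Pn[r rS].
apply: leq_trans (conn_lb (subsetP HS r rS) Hc).
exact: subset_leq_card.
Qed.

Lemma adm_eq S H : steiner_adm e S H -> #|H.2|.+1 = #|S| -> 2 <= #|S| ->
  forall x, x \in S -> exists2 y, y \in S & (x != y) && e x y.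
Proof.
case: H => W F /and3P[/andP[/= HF HFW] /= Hc HS] Ec H2.
have S0 : S != set0 by rewrite -card_gt0 (leq_trans _ H2).
have EW : W = S.
  apply/esym/eqP; rewrite eqEcard HS /=.
  have [r rS] := set0Pn _ S0.
  by rewrite -Ec; apply: conn_lb (subsetP HS r rS) Hc.
subst W => x xS.
have [z /andP[zx zS]] : exists z, (z != x) && (z \in S).
  apply/existsP; apply: contraLR H2; rewrite negb_exists => /forallP Hn.
  rewrite -leqNgt (cardsD1 x) xS add1n ltnS leqn0 cards_eq0; apply/eqP/setP => w.
  by rewrite !inE; have := Hn w; case: (w \in S); rewrite ?andbF ?andbT // => /negbNE ->.
have : connect (frel_of F) x z.
  by move/forallP: Hc => /(_ x); rewrite xS /= => /forallP/(_ z); rewrite zS.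
move/connectP=> [[|y p] /=]; first by move=> _ E; rewrite E eqxx in zx.
move=> /andP[Hxy _] _; have Hxy2 : [set x; y] \in F := Hxy.
have Hg := subsetP HF _ Hxy.
have exy := gedgeP Hg.
exists y.
  have := forallP HFW [set x; y]; rewrite Hxy2 /= => /subsetP; apply; exact: set22.
rewrite exy andbT; apply/eqP => E; subst y; case: He => _ Hi; by rewrite Hi in exy.
Qed.

Definition starF m (W : {set T}) : {set {set T}} := [set [set m; x] | x in W :\ m].

Lemma star_adm (S : {set T}) m (W : {set T}) : m \in W -> S \subset W ->
  (forall x, x \in W -> x != m -> e m x) ->
  steiner_adm e S (W, starF m W) /\ #|starF m W| = #|W|.-1.
Proof.
move=> mW SW Hm; split; last first.
  rewrite card_in_imset; first by rewrite (cardsD1 m W) mW.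
  move=> x y; rewrite !inE => /andP[xm _] /andP[ym _] E.
  have : x \in [set m; y] by rewrite -E set22.
  by rewrite !inE (negbTE xm) => /eqP.
apply/and3P; split => //=.
- apply/andP; split.
    apply/subsetP=> f /imsetP[x]; rewrite !inE => /andP[xm xW] ->.
    apply/existsP; exists m; apply/existsP; exists x; by rewrite Hm // eqxx.
  apply/forallP=> f; apply/implyP=> /imsetP[x]; rewrite !inE => /andP[xm xW] ->.
  by apply/subsetP=> y; rewrite !inE => /orP[]/eqP->.
- have Hc u : u \in W -> connect (frel_of (starF m W)) u m.
    move=> uW; case: (eqVneq u m) => [->|um]; first exact: connect0.
    apply: connect1; rewrite /frel_of setUC; apply/imsetP; exists u => //.
    by rewrite !inE um.
  apply/forallP=> u; apply/implyP=> uW; apply/forallP=> v; apply/implyP=> vW.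
  apply: connect_trans (Hc u uW) _.
  case: He => Hs _.
  have : connect_sym (frel_of (starF m W)).
    apply: sym_connect_sym => a b; by rewrite /frel_of setUC.
  by move=> cs; rewrite cs; apply: Hc.
Qed.

End G.
Set Implicit Arguments. Unset Strict Implicit.

Section C.
Variables (T : finType) (e : rel T) (c : T).
Hypothesis He : simple_graph e.
Hypothesis Hc : forall x, x != c -> e c x.

Definition goodS (S : {set T}) := [exists m in S, [forall j in S, (j != m) ==> e m j]].

Lemma sd_center (S : {set T}) : c \in S -> steiner_dist e S = #|S|.-1.
Proof.
move=> cS; apply: sd_eq.
  exists (S, starF c S); have [A E] := star_adm He cS (subxx S) (fun x _ => Hc (x:=x)).
  by split.
move=> H A; have := adm_lb A; rewrite -card_gt0 (cardsD1 c S) cS /= => /(_ isT).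
by rewrite add1n ltnS.
Qed.

Lemma sd_nocenter (S : {set T}) : c \notin S -> 1 < #|S| ->
  ((forall x, x \in S -> exists2 y, y \in S & (x != y) && e x y) -> goodS S) ->
  steiner_dist e S = if goodS S then #|S|.-1 else #|S|.
Proof.
move=> cS S2 Hnb.
have S0 : S != set0 by rewrite -card_gt0 (ltn_trans _ S2).
case: ifP => Hg.
  apply: sd_eq.
    case/existsP: Hg => m /andP[mS /forallP Hm].
    have Hm' : forall x, x \in S -> x != m -> e m x.
      by move=> x xS xm; have := Hm x; rewrite xS xm.
    exists (S, starF m S); have [A E] := star_adm He mS (subxx S) Hm'.
    by split.
  by move=> H A; have := adm_lb A S0; rewrite -(prednK (ltnW S2)) ltnS.
apply: sd_eq.
  have cW : c \in c |: S by rewrite setU11.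
  have [A E] := star_adm He cW (subsetUr [set c] S) (fun x _ => Hc (x:=x)).
  by exists (c |: S, starF c (c |: S)); split=> //; rewrite E cardsU1 cS.
move=> H A; have := adm_lb A S0; rewrite leq_eqVlt ltnS => /orP[/eqP E|//].
have := adm_eq He A (esym E) S2; move/Hnb; by rewrite Hg.
Qed.

End C.
Set Implicit Arguments. Unset Strict Implicit.

Section S.
Variables (n' : nat) (a : seq nat).
Local Notation n := n'.+1.

Definition eG : rel 'I_n := fun i j =>
  @star_rel n i j || [&& val i != 0, val j != 0, i != j & (maxn i j).-1 \in a].

Lemma star_simple : simple_graph (@star_rel n).
Proof.
split.
  by move=> i j; rewrite /star_rel orbC.
by move=> i; rewrite /star_rel orbb; case: eqP.
Qed.

Lemma eG_simple : simple_graph eG.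
Proof.
split.
  move=> i j; rewrite /eG /star_rel maxnC [j == i]eq_sym.
  by case: (val i == 0); case: (val j == 0); rewrite //= ?orbF.
by move=> i; rewrite /eG (snd star_simple) eqxx /= !andbF.
Qed.

Lemma star_c x : x != ord0 -> @star_rel n ord0 x.
Proof. by move=> H; rewrite /star_rel eqxx /=; apply/orP; left. Qed.

Lemma eG_c x : x != ord0 -> eG ord0 x.
Proof. by move=> H; rewrite /eG star_c. Qed.

Lemma nz (S : {set 'I_n}) x : ord0 \notin S -> x \in S -> (val x == 0) = false.
Proof.
move=> cS xS; apply: contraNF cS => /eqP hx.
by rewrite (_ : ord0 = x) //; apply: val_inj.
Qed.

Lemma other (T : finType) (S : {set T}) m : 1 < #|S| -> exists2 j, j \in S & j != m.
Proof.
move=> S2; case: (boolP [exists j, (j \in S) && (j != m)]).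
  by case/existsP=> j /andP[]; exists j.
rewrite negb_exists => /forallP Hn.
have : S \subset [set m].
  by apply/subsetP=> j jS; have := Hn j; rewrite jS inE /= => /negbNE.
by move/subset_leq_card; rewrite cards1 leqNgt S2.
Qed.

Lemma maxP (S : {set 'I_n}) : S != set0 -> exists2 M, M \in S & forall j, j \in S -> val j <= val M.
Proof.
case/set0Pn=> m mS.
case: (arg_maxnP (fun i : 'I_n => val i) mS) => M MS HM.
by exists M.
Qed.

Lemma star_nb (S : {set 'I_n}) : ord0 \notin S -> S != set0 ->
  (forall x, x \in S -> exists2 y, y \in S & (x != y) && star_rel x y) -> False.
Proof.
move=> cS /set0Pn[x xS] Hnb.
case: (Hnb x xS) => y yS /andP[_]; by rewrite /star_rel (nz cS xS) (nz cS yS).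
Qed.

Lemma star_notgood (S : {set 'I_n}) : ord0 \notin S -> 1 < #|S| -> goodS (@star_rel n) S = false.
Proof.
move=> cS S2; apply/negbTE/negP => /existsP[m /andP[mS /forallP Hm]].
case: (other m S2) => j jS jm.
by have := Hm j; rewrite jS jm /= /star_rel (nz cS mS) (nz cS jS).
Qed.

Lemma eGmax (S : {set 'I_n}) u v : ord0 \notin S -> u \in S -> v \in S ->
  eG u v -> val u <= val v -> (val v).-1 \in a.
Proof.
move=> cS uS vS; rewrite /eG /star_rel (nz cS uS) (nz cS vS) /= => /andP[_ H] uv.
by move: H; rewrite (maxn_idPr uv).
Qed.

Lemma hubM (S : {set 'I_n}) M : ord0 \notin S -> M \in S ->
  (forall j, j \in S -> val j <= val M) -> (val M).-1 \in a ->
  forall j, j \in S -> j != M -> eG M j.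
Proof.
move=> cS MS HM Ha j jS jM.
rewrite /eG (nz cS MS) (nz cS jS) eq_sym jM /=; apply/orP; right.
by rewrite (maxn_idPl (HM j jS)).
Qed.

Lemma hub_good (S : {set 'I_n}) M : ord0 \notin S -> M \in S ->
  (forall j, j \in S -> val j <= val M) -> (val M).-1 \in a -> goodS eG S.
Proof.
move=> cS MS HM Ha; apply/existsP; exists M; rewrite MS /=.
apply/forallP=> j; apply/implyP=> jS; apply/implyP=> jM.
exact: hubM MS HM Ha j jS jM.
Qed.

Lemma eG_nb (S : {set 'I_n}) : ord0 \notin S -> 1 < #|S| ->
  (forall x, x \in S -> exists2 y, y \in S & (x != y) && eG x y) -> goodS eG S.
Proof.
move=> cS S2 Hnb.
have S0 : S != set0 by rewrite -card_gt0 (ltn_trans _ S2).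
case: (maxP S0) => M MS HM.
case: (Hnb M MS) => y yS /andP[_ Hy].
apply: (hub_good cS MS HM).
apply: (eGmax cS yS MS) => //.
  by rewrite (fst eG_simple).
exact: HM.
Qed.

Lemma good_max (S : {set 'I_n}) : ord0 \notin S -> 1 < #|S| -> goodS eG S ->
  exists2 M, M \in S & (forall j, j \in S -> val j <= val M) /\ (val M).-1 \in a.
Proof.
move=> cS S2 /existsP[m /andP[mS /forallP Hm]].
have S0 : S != set0 by rewrite -card_gt0 (ltn_trans _ S2).
case: (maxP S0) => M MS HM; exists M => //; split => //.
case: (eqVneq m M) => [E|mM].
  subst M; case: (other m S2) => j jS jM.
  have := Hm j; rewrite jS jM /= => H.
  by apply: (eGmax cS jS MS); [rewrite (fst eG_simple) | apply: HM].
have := Hm M; rewrite MS eq_sym mM /= => H.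
by apply: (eGmax cS mS MS H); apply: HM.
Qed.

Definition famx x (S : {set 'I_n}) :=
  [forall j in S, 0 < val j <= x.+1] && [exists j in S, val j == x.+1].

Lemma good_fam (S : {set 'I_n}) : 1 < #|S| ->
  (ord0 \notin S) && goodS eG S = has (fun x => famx x S) a.
Proof.
move=> S2; apply/idP/idP.
  case/andP=> cS Hg; case: (good_max cS S2 Hg) => M MS [HM Ha].
  have M0 : 0 < val M by rewrite lt0n (nz cS MS).
  apply/hasP; exists (val M).-1 => //; rewrite /famx prednK //.
  apply/andP; split; last by apply/existsP; exists M; rewrite MS eqxx.
  apply/forallP=> j; apply/implyP=> jS; by rewrite lt0n (nz cS jS) HM.
case/hasP=> x xa /andP[/forallP Hall /existsP[M /andP[MS /eqP EM]]].
have cS : ord0 \notin S.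
  by apply/negP=> c0; have := Hall ord0; rewrite c0.
rewrite cS /=; apply: (hub_good cS MS).
  by move=> j jS; have := Hall j; rewrite jS EM => /andP[].
by rewrite EM.
Qed.


End S.
Set Implicit Arguments. Unset Strict Implicit.

Section S2.
Variables (n' : nat) (a : seq nat).
Local Notation n := n'.+1.

Lemma cardB x : x < n -> #|[set j : 'I_n | 0 < val j <= x]| = x.
Proof.
move=> xn.
have -> : [set j : 'I_n | 0 < val j <= x] = [set inord (val i).+1 | i : 'I_x].
  apply/setP=> j; rewrite inE; apply/idP/imsetP.
    case/andP=> j0 jx.
    have hj : (val j).-1 < x by rewrite prednK.
    exists (Ordinal hj) => //; apply: val_inj; rewrite /= inordK prednK //.
  case=> i _ ->; rewrite /= inordK ?ltn0Sn //=.
  by rewrite (leq_ltn_trans (ltn_ord i)).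
rewrite card_imset ?card_ord // => i j E.
apply: val_inj; have := congr1 val E; rewrite /= !inordK //.
- by case.
- by rewrite (leq_ltn_trans (ltn_ord j)).
- by rewrite (leq_ltn_trans (ltn_ord i)).
Qed.

Lemma fam_card x k : x.+1 < n -> 0 < k ->
  #|[set S : {set 'I_n} | (#|S| == k) && famx x S]| = 'C(x, k.-1).
Proof.
move=> xn k0.
pose p := Ordinal xn.
pose B := [set j : 'I_n | 0 < val j <= x].
have pB : p \notin B by rewrite /B inE /= ltnn.
have -> : [set S : {set 'I_n} | (#|S| == k) && famx x S] =
          (fun T : {set 'I_n} => p |: T) @: [set T : {set 'I_n} | T \subset B & #|T| == k.-1].
  apply/setP=> S; rewrite inE; apply/idP/imsetP.
    case/andP=> /eqP Sk /andP[/forallP Hall /existsP[q /andP[qS /eqP Eq]]].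
    have Epq : q = p by apply: val_inj.
    subst q.
    exists (S :\ p); last by rewrite setD1K.
    rewrite inE; apply/andP; split.
      apply/subsetP=> j; rewrite !inE => /andP[jp jS].
      have := Hall j; rewrite jS /= => /andP[-> jx] /=.
      rewrite leq_eqVlt ltnS in jx; case/orP: jx => [/eqP E|//].
      by case/eqP: jp; apply: val_inj.
    by rewrite (cardsD1 p S) qS add1n in Sk; rewrite -Sk.
  case=> T; rewrite inE => /andP[TB /eqP Tk] ->.
  have pT : p \notin T by apply: contra pB; apply: (subsetP TB).
  rewrite cardsU1 pT Tk add1n prednK // eqxx /=.
  apply/andP; split; last by apply/existsP; exists p; rewrite setU11 /=.
  apply/forallP=> j; apply/implyP; rewrite !inE => /orP[/eqP ->|jT] /=.
    by rewrite leqnn.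
  have := subsetP TB j jT; rewrite inE => /andP[-> jx]; by rewrite (leq_trans jx).
rewrite card_in_imset ?cards_draws ?cardB //; first by apply: ltnW.
move=> T1 T2; rewrite !inE => /andP[T1B _] /andP[T2B _] E.
have pT1 : p \notin T1 by apply: contra pB; apply: (subsetP T1B).
have pT2 : p \notin T2 by apply: contra pB; apply: (subsetP T2B).
by rewrite -(setU1K pT1) -(setU1K pT2) E.
Qed.

End S2.
Unset Implicit Arguments. Set Strict Implicit.

Lemma count_uniq (T : eqType) (P : pred T) (s : seq T) : uniq s ->
  (forall x y, P x -> P y -> x = y) -> count P s = has P s.
Proof.
move=> us HP; elim: s us => [//|x s IH] /= /andP[xs us].
case Px: (P x) => /=; last by rewrite add0n IH.
suff -> : count P s = 0 by [].
apply/eqP; rewrite -leqn0 leqNgt -has_count; apply/hasP => -[y ys Py].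
by move: xs; rewrite (HP x y Px Py) ys.
Qed.

Lemma famx_uniq n' (S : {set 'I_n'.+1}) x y : famx x S -> famx y S -> x = y.
Proof.
have H u v : famx u S -> famx v S -> u <= v.
  rewrite /famx; case/andP=> _ /existsP[q] /andP[qS /eqP Eq] /andP[/forallP Hall _].
  by have := Hall q; rewrite qS Eq /= ltnS.
by move=> hx hy; apply/eqP; rewrite eqn_leq !H.
Qed.

Import GRing.Theory.
Local Open Scope ring_scope.

Theorem proposition1p2 (k n : nat) (a : seq nat) :
  (2 <= k)%N -> (0 < n)%N ->
  sorted ltn a -> all (fun x => 0 < x)%N a -> all (fun x => x < n - 1)%N a ->
  exists (T : finType) (e : rel T),
    [/\ simple_graph e, gconnected e &
        ((SW k e)%:Z = (SW k (@star_rel n))%:Z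
                        - (\sum_(x <- a) 'C(x, k - 1))%:Z)].
Proof.
move=> k2 n0 sa apos alt.
case: n n0 alt => [//|n'] _ alt.
exists (ordinal n'.+1); exists (@eG n' a); split.
- exact: eG_simple.
- split; first by rewrite card_ord.
  have H x : connect (@eG n' a) x ord0.
    case: (eqVneq x ord0) => [->|xo]; first exact: connect0.
    by apply: connect1; rewrite (fst (eG_simple n' a)) eG_c.
  move=> x y; apply: connect_trans (H x) _.
  have : connect_sym (@eG n' a) by apply: sym_connect_sym; exact: (fst (eG_simple n' a)).
  by move=> cs; rewrite cs.
suff Hs : (SW k (@star_rel n'.+1) = SW k (@eG n' a) + \sum_(x <- a) 'C(x, k - 1))%N.
  by rewrite Hs PoszD addrK.
have per (S : {set 'I_n'.+1}) : #|S| == k ->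
   steiner_dist (@star_rel n'.+1) S = (steiner_dist (@eG n' a) S + ((ord0 \notin S) && goodS (@eG n' a) S))%N.
  move=> /eqP Sk; have S2 : (1 < #|S|)%N by rewrite Sk.
  case: (boolP (ord0 \in S)) => cS /=.
    by rewrite (sd_center (star_simple n') (@star_c n') cS) (sd_center (eG_simple n' a) (@eG_c n' a) cS) addn0.
  rewrite (sd_nocenter (star_simple n') (@star_c n') cS S2); last first.
    move=> Hnb; exfalso; apply: (star_nb cS _ Hnb).
    by rewrite -card_gt0 (ltn_trans _ S2).
  rewrite star_notgood //.
  rewrite (sd_nocenter (eG_simple n' a) (@eG_c n' a) cS S2); last exact: eG_nb.
  by case: (goodS _ S) => /=; rewrite ?addn0 ?addn1 ?prednK // (ltn_trans _ S2).
rewrite /SW (eq_bigr _ per) big_split /=; congr (_ + _)%N.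
have ua : uniq a by apply: (sorted_uniq ltn_trans ltnn sa).
transitivity (\sum_(S : {set 'I_n'.+1} | #|S| == k) \sum_(x <- a) (if famx x S then 1 else 0))%N.
  apply: eq_bigr => S /eqP Sk.
  rewrite good_fam ?Sk // -count_uniq //; last by move=> x y; apply: famx_uniq.
  by rewrite -sum1_count big_mkcond.
rewrite exchange_big /=; apply: eq_big_seq => x xa.
rewrite -big_mkcondr sum1dep_card fam_card ?subn1 //; last by rewrite (leq_trans _ k2).
by have := allP alt x xa; rewrite subn1.
Qed.
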